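(* For every $\lambda\in\mathscr{SP}(n)$, the minimal length representative of the coset $v(\lambda)W_P$ equals $u_{\lambda^*}$.
   Context: $W_{\mathrm{af}}$ is the affine Weyl group of type $C_n^{(1)}$ generated by $s_0,\dots,s_n$; $W=\langle s_1,\dots,s_n\rangle$ acts on $X^\vee=\bigoplus_{i=1}^n\mathbb{Z}\varepsilon_i$ ($s_i$ swaps $\varepsilon_i,\varepsilon_{i+1}$ for $i<n$; $s_n$ negates $\varepsilon_n$); $Q^\vee$ the coroot lattice spanned by $\varepsilon_i-\varepsilon_{i+1}$ and $\varepsilon_n$; $W_{\mathrm{af}}\cong W\ltimes Q^\vee$ (elements $wt_\xi$, $wt_\xi w^{-1}=t_{w\xi}$), $s_0=s_\theta t_{-\varepsilon_1}$ with $s_\theta=s_1\cdots s_{n-1}s_ns_{n-1}\cdots s_1$. $W_P=\langle s_1,\dots,s_{n-1}\rangle$. $\rho_i=s_{i-1}\cdots s_1s_0$ for $1\le i\le n$. $\mathscr{SP}(n)$ is the set of strict partitions $\lambda=(\lambda_1>\dots>\lambda_l>0)$ with $\lambda_1\le n$; $x_\lambda=\rho_{\lambda_l}\cdots\rho_{\lambda_1}$, and $v(\lambda)\in W$ is defined by $x_\lambda=v(\lambda)t_{-\xi}$ for some $\xi\in Q^\vee$. For $1\le k\le n$, $u_k=s_{n+1-k}\cdots s_{n-1}s_n$, and $u_\lambda=u_{\lambda_l}\cdots u_{\lambda_1}$. $\lambda^*=(n+1-\lambda_l,\dots,n+1-\lambda_1)$. *)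

(* Defs.v *)
From HB Require Import structures.
From mathcomp Require Import all_boot all_order all_algebra.
Set Implicit Arguments. Unset Strict Implicit. Unset Printing Implicit Defensive.
Import GRing.Theory Num.Theory.
Local Open Scope ring_scope.

(* Conventions: X^vee = Z^n as column vectors 'cV[int]_n; the 0-based index
   a : 'I_n stands for epsilon_(a+1).  Elements of W are represented by the
   integer n x n matrices of their action on X^vee (columns = images of the
   basis vectors).  Q^vee = Z^n (it is spanned by eps_i - eps_(i+1), eps_n). *)

Definition swapn (i b : nat) : nat :=
  if b == i.-1 then i else if b == i then i.-1 else b.

Definition sgen (n i : nat) : 'M[int]_n :=
  \matrix_(a < n, b < n)
    (if (0 < i < n)%N then (nat_of_bool ((a : nat) == swapn i b))%:Z
     else if i == n then
       (if a == b then (if (a : nat) == n.-1 then -1 else 1) else 0)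
     else (nat_of_bool (a == b))%:Z).

Definition wprod (n : nat) (ws : seq nat) : 'M[int]_n :=
  foldr (fun i acc => sgen n i *m acc) 1%:M ws.

Definition s_theta (n : nat) : 'M[int]_n :=
  wprod n (iota 1 n ++ rev (iota 1 n.-1)).

(* W_af = W |x Q^vee: the pair (w, xi) stands for w t_xi.
   (w t_xi)(v t_eta) = w v t_(v^-1 xi + eta), since t_xi v = v t_(v^-1 xi). *)
Definition afel (n : nat) := ('M[int]_n * 'cV[int]_n)%type.

Definition afmul (n : nat) (x y : afel n) : afel n :=
  (x.1 *m y.1, invmx y.1 *m x.2 + y.2).

Definition afone (n : nat) : afel n := (1%:M, 0).

Definition eps1 (n : nat) : 'cV[int]_n :=
  \col_(a < n) (if (a : nat) == 0%N then 1 else 0).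

Definition afgen (n i : nat) : afel n :=
  if i == 0%N then (s_theta n, - eps1 n) else (sgen n i, 0).

Definition afprod (n : nat) (ws : seq nat) : afel n :=
  foldr (fun i acc => afmul (afgen n i) acc) (afone n) ws.

Definition rho (n i : nat) : afel n := afprod n (rev (iota 0 i)).

Definition strict_part (n : nat) (lam : seq nat) : bool :=
  sorted (fun x y => y < x)%N lam && all (fun k => 0 < k <= n)%N lam.

Definition x_lam (n : nat) (lam : seq nat) : afel n :=
  foldl (fun acc k => afmul (rho n k) acc) (afone n) lam.

(* v(lambda): x_lambda = v(lambda) t_(-xi) *)
Definition v_lam (n : nat) (lam : seq nat) : 'M[int]_n := (x_lam n lam).1.

Definition u_k (n k : nat) : 'M[int]_n := wprod n (iota (n.+1 - k) k).

Definition u_lam (n : nat) (lam : seq nat) : 'M[int]_n :=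
  foldl (fun acc k => u_k n k *m acc) 1%:M lam.

Definition lam_star (n : nat) (lam : seq nat) : seq nat :=
  map (fun k => n.+1 - k)%N (rev lam).

Definition W_word (n : nat) (ws : seq nat) : bool := all (fun i => 0 < i <= n)%N ws.

Definition length_W (n : nat) (w : 'M[int]_n) (k : nat) : Prop :=
  (exists2 ws, W_word n ws & (size ws = k /\ wprod n ws = w)) /\
  (forall ws, W_word n ws -> wprod n ws = w -> (k <= size ws)%N).

Definition in_coset_WP (n : nat) (v w : 'M[int]_n) : Prop :=
  exists2 ws, all (fun i => 0 < i < n)%N ws & w = v *m wprod n ws.

Definition min_coset_rep (n : nat) (v u : 'M[int]_n) : Prop :=
  in_coset_WP v u /\ (exists k, length_W u k) /\
  forall w, in_coset_WP v w -> w <> u ->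
    forall lu lw, length_W u lu -> length_W w lw -> (lu < lw)%N.

(* Main.v *)
Require Import Defs.
From mathcomp Require Import all_boot all_order all_algebra.
From mathcomp Require Import zify.
From Stdlib Require Import Classical.
Set Implicit Arguments. Unset Strict Implicit. Unset Printing Implicit Defensive.
Import GRing.Theory Num.Theory.

Definition sv := (bool * nat)%type.

Definition phi (n i : nat) (x : sv) : sv :=
  if (0 < i < n)%N then (x.1, swapn i x.2)
  else if i == n then (x.1 (+) (x.2 == n.-1), x.2) else x.

Definition act (n : nat) (ws : seq nat) (x : sv) : sv := foldr (phi n) x ws.

Definition negv (x : sv) : sv := (~~ x.1, x.2).

Definition sg (s : bool) : int := if s then (-1)%R else 1%R.

Definition mat (n : nat) (A : sv -> sv) : 'M[int]_n :=
  \matrix_(a < n, b < n) (if (a : nat) == (A (false, b : nat)).2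
                          then sg (A (false, b : nat)).1 else 0%R).

Lemma swapn_lt n i j : (0 < i < n)%N -> (j < n)%N -> (swapn i j < n)%N.
Proof. rewrite /swapn => /andP[h1 h2] hj. case: eqP => _; first lia. case: eqP => _; lia. Qed.

Lemma phi_lt n i x : (x.2 < n)%N -> ((phi n i x).2 < n)%N.
Proof.
rewrite /phi. case: ifP => [h|_] hx /=; first exact: swapn_lt.
by case: ifP.
Qed.

Lemma act_lt n ws x : (x.2 < n)%N -> ((act n ws x).2 < n)%N.
Proof. elim: ws => [//|i ws IH] /= h. exact/phi_lt/IH. Qed.

Lemma phi_neg n i x : phi n i (negv x) = negv (phi n i x).
Proof. rewrite /phi /negv /=. case: ifP => //= _. case: ifP => //= _. by rewrite addNb. Qed.

Lemma act_neg n ws x : act n ws (negv x) = negv (act n ws x).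
Proof. elim: ws => [//|i ws IH] /=. by rewrite IH phi_neg. Qed.

Lemma act_cat n ws1 ws2 x : act n (ws1 ++ ws2) x = act n ws1 (act n ws2 x).
Proof. by rewrite /act foldr_cat. Qed.

Lemma sgen_mat n i : sgen n i = mat n (phi n i).
Proof.
apply/matrixP => a b. rewrite !mxE /phi.
case: ifP => h /=.
  by case: eqP.
case: ifP => h2 /=.
  case: (a =P b) => [->|ne].
    rewrite eqxx /sg. by case: (_ == _).
  case: eqP => // e. by case: ne; apply: val_inj.
case: (a =P b) => [->|ne]; first by rewrite eqxx.
case: eqP => // e. by case: ne; apply: val_inj.
Qed.

Lemma mat_ext n A B : (forall b, (b < n)%N -> A (false, b) = B (false, b)) -> mat n A = mat n B.
Proof. move=> h. apply/matrixP => a b. by rewrite !mxE h. Qed.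

Lemma mat1 n : mat n id = (1%:M)%R.
Proof.
apply/matrixP => a b. rewrite !mxE /=.
case: (a =P b) => [->|ne]; first by rewrite !eqxx.
case: eqP => // e. by case: ne; apply: val_inj.
Qed.

Lemma sg_add s t : sg (s (+) t) = (sg s * sg t)%R.
Proof. by case: s; case: t; rewrite /sg /= ?mulN1r ?mulr1 ?opprK ?mul1r. Qed.

Lemma mat_mul n A B :
  (forall b, (b < n)%N -> ((B (false, b)).2 < n)%N) ->
  (forall x, A (negv x) = negv (A x)) ->
  (mat n A *m mat n B = mat n (A \o B))%R.
Proof.
move=> hB hA. apply/matrixP => a b. rewrite !mxE /=.
have hr := hB _ (ltn_ord b).
set r := Ordinal hr.
rewrite (bigD1 r) //= big1 ?addr0; last first.
  move=> c hc. rewrite !mxE.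
  rewrite [X in (_ * X)%R](_ : _ = 0%R) ?mulr0 //.
  case: eqP => // e; case/eqP: hc; exact: val_inj.
rewrite !mxE /= eqxx.
have key : forall x, A x = if x.1 then negv (A (false, x.2)) else A (false, x.2).
  case=> [[] j] //=. by rewrite -hA.
rewrite [A (B _)]key.
case: (B (false, b : nat)).1 => /=.
  case: eqP => _; last by rewrite mul0r.
  by rewrite /sg; case: (A _).1; rewrite /= ?mulN1r ?opprK ?mulr1.
case: eqP => _; last by rewrite mul0r.
by rewrite mulr1.
Qed.

Lemma wprod_mat n ws : wprod n ws = mat n (act n ws).
Proof.
elim: ws => [|i ws IH] /=; first by rewrite -mat1; apply: mat_ext.
rewrite IH sgen_mat mat_mul //.
- by move=> b hb; apply: act_lt.
- by move=> x; rewrite phi_neg.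
Qed.
Definition thetaW (n : nat) := iota 1 n ++ rev (iota 1 n.-1).
Definition expand (n : nat) (ws : seq nat) :=
  flatten [seq (if i == 0%N then thetaW n else [:: i]) | i <- ws].
Definition rhoW (n i : nat) := expand n (rev (iota 0 i)).

Lemma wprod_cat n a b : wprod n (a ++ b) = (wprod n a *m wprod n b)%R.
Proof.
elim: a => [|i a IH] /=; first by rewrite mul1mx.
by rewrite IH mulmxA.
Qed.

Lemma afprod1 n ws : (afprod n ws).1 = wprod n (expand n ws).
Proof.
elim: ws => [//|i ws IH] /=. rewrite /expand /= wprod_cat -/(expand n ws) -IH.
rewrite /afgen. case: (i == 0%N) => //=. by rewrite mulmx1.
Qed.

Lemma foldl_wprod n (F : nat -> 'M[int]_n) (W : nat -> seq nat) L (M : 'M[int]_n) :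
  (forall k, F k = wprod n (W k)) ->
  foldl (fun acc k => (F k *m acc)%R) M L = (wprod n (flatten (map W (rev L))) *m M)%R.
Proof.
move=> hF. elim: L M => [|k L IH] M /=; first by rewrite mul1mx.
rewrite IH rev_cons -cats1 map_cat flatten_cat wprod_cat /= cats0 hF mulmxA //.
Qed.

Definition Vword n lam := flatten (map (rhoW n) (rev lam)).
Definition Uword n (lam : seq nat) := flatten [seq iota x (n.+1 - x) | x <- lam].

Lemma v_lam_w n lam : v_lam n lam = wprod n (Vword n lam).
Proof.
rewrite /v_lam /x_lam.
have h : forall (M : afel n) L, (foldl (fun acc k => afmul (rho n k) acc) M L).1 =
   foldl (fun acc k => ((rho n k).1 *m acc)%R) M.1 L.
  by move=> M L; elim: L M => [|k L IH] M //=; rewrite IH.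
rewrite h (foldl_wprod (W := rhoW n)) /= ?mulmx1 //.
by move=> k; rewrite /rho afprod1.
Qed.

Lemma u_lam_w n lam : all (fun k => k <= n)%N lam -> u_lam n (lam_star n lam) = wprod n (Uword n lam).
Proof.
move=> hl. rewrite /u_lam (foldl_wprod (W := fun k => iota (n.+1 - k) k)) ?mulmx1 //.
rewrite /lam_star -map_rev revK /Uword -map_comp. congr wprod; congr flatten.
apply/eq_in_map => x hx /=. have := allP hl x hx. by move=> h; rewrite subKn //; lia.
Qed.
Ltac crush := rewrite ?/swapn; repeat match goal with |- context[if ?b then _ else _] =>
  lazymatch b with context[if _ then _ else _] => fail | _ => idtac end;
  let H := fresh "H" in case H: b end;
  repeat match goal with |- context[(?a == ?b :> nat)] =>
  lazymatch a with context[if _ then _ else _] => fail | _ => idtac end;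
  lazymatch b with context[if _ then _ else _] => fail | _ => idtac end;
  let H := fresh "H" in case H: (a == b) end;
  rewrite ?addbT ?addbF /=; try (congr (_, _)); try lia.

Definition cyc (a k j : nat) : nat :=
  if (a.-1 <= j < a + k - 1)%N then j.+1 else if j == (a + k - 1)%N then a.-1 else j.
Definition rcyc (a k j : nat) : nat :=
  if (a <= j <= a + k - 1)%N then j.-1 else if j == a.-1 then (a + k - 1)%N else j.

Lemma phi_small n i x : (0 < i < n)%N -> phi n i x = (x.1, swapn i x.2).
Proof. by rewrite /phi => ->. Qed.

Lemma phi_top n x : phi n n x = (x.1 (+) (x.2 == n.-1), x.2).
Proof. rewrite /phi eqxx. case: ifP => //. lia. Qed.

Lemma act_iota n a k s j : (1 <= a)%N -> (a + k <= n)%N ->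
  act n (iota a k) (s, j) = (s, cyc a k j).
Proof.
elim: k a => [|k IH] a ha hk /=.
  congr (_, _); rewrite /cyc; crush.
rewrite IH; try lia. rewrite phi_small /=; last lia. congr (_, _).
rewrite /cyc. crush.
Qed.

Lemma act_riota n a k s j : (1 <= a)%N -> (a + k <= n)%N ->
  act n (rev (iota a k)) (s, j) = (s, rcyc a k j).
Proof.
elim: k a j => [|k IH] a j ha hk /=.
  congr (_, _); rewrite /rcyc; crush.
rewrite rev_cons -cats1 act_cat /= phi_small /=; last lia.
rewrite IH; try lia. congr (_, _).
rewrite /rcyc. crush.
Qed.
Lemma act_theta n s j : (0 < n)%N -> (j < n)%N ->
  act n (thetaW n) (s, j) = if j == 0%N then (~~ s, 0%N) else (s, j).
Proof.
move=> hn hj. rewrite /thetaW act_cat act_riota; try lia.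
have -> : iota 1 n = iota 1 n.-1 ++ [:: n].
  have e : n = (n.-1 + 1)%N by lia.
  rewrite {1}e iotaD /=. congr (_ ++ [:: _]). lia.
rewrite act_cat /= phi_top /= act_iota; try lia.
rewrite /rcyc /cyc. crush.
Qed.

Lemma expand_nz n ws : all (fun i => i != 0%N) ws -> expand n ws = ws.
Proof. elim: ws => [//|i ws IH] /= /andP[/negPf hi h]. by rewrite /expand /= hi -/(expand n ws) IH. Qed.

Lemma act_rho n y s j : (1 <= y <= n)%N -> (j < n)%N ->
  act n (rhoW n y) (s, j) =
  if j == 0%N then (~~ s, y.-1) else if (j < y)%N then (s, j.-1) else (s, j).
Proof.
move=> /andP[hy hyn] hj. rewrite /rhoW.
have -> : rev (iota 0 y) = rev (iota 1 y.-1) ++ [:: 0%N].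
  by rewrite -(prednK hy) /= rev_cons -cats1.
have -> : expand n (rev (iota 1 y.-1) ++ [:: 0%N]) = rev (iota 1 y.-1) ++ thetaW n.
  rewrite /expand map_cat flatten_cat -/(expand n _) expand_nz /= ?cats0 //.
  rewrite all_rev. apply/allP => i. rewrite mem_iota. lia.
rewrite act_cat act_theta; try lia.
case: ifP => h0 /=; rewrite act_riota; try lia; rewrite /rcyc; crush.
Qed.

Lemma act_u n x s j : (1 <= x <= n)%N -> (j < n)%N ->
  act n (iota x (n.+1 - x)) (s, j) =
  if j == n.-1 then (~~ s, x.-1) else if (x.-1 <= j)%N then (s, j.+1) else (s, j).
Proof.
move=> /andP[hx hxn] hj.
have -> : iota x (n.+1 - x) = iota x (n - x) ++ [:: n].
  have e : (n.+1 - x = (n - x) + 1)%N by lia.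
  rewrite e iotaD /=. congr (_ ++ [:: _]). lia.
rewrite act_cat /= phi_top /= act_iota; try lia.
rewrite /cyc. crush.
Qed.
Definition Perm n (g : nat -> sv) :=
  [/\ (forall b, (b < n)%N -> ((g b).2 < n)%N),
      (forall b c, (b < n)%N -> (c < n)%N -> (g b).2 = (g c).2 -> b = c) &
      (forall r, (r < n)%N -> exists2 b, (b < n)%N & (g b).2 = r)].

Definition Inv n (S : nat -> bool) (g : nat -> sv) :=
  Perm n g /\ forall b, (b < n)%N -> (g b).1 = S (g b).2.

Definition key n (x : sv) : nat := if x.1 then x.2 else (n + n - x.2)%N.

Definition Dec n (g : nat -> sv) := forall a b, (a < b)%N -> (b < n)%N -> (key n (g b) < key n (g a))%N.

Lemma permS_map n g (h : sv -> sv) (sigma tau : nat -> nat) :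
  Perm n g -> (forall s j, (j < n)%N -> (h (s, j)).2 = sigma j) ->
  (forall j k, (j < n)%N -> (k < n)%N -> sigma j = sigma k -> j = k) ->
  (forall j, (j < n)%N -> (sigma j < n)%N) ->
  (forall r, (r < n)%N -> (tau r < n)%N /\ sigma (tau r) = r) ->
  Perm n (fun b => h (g b)).
Proof.
case=> g1 g2 g3 hh si1 si2 ta. split.
- move=> b hb. rewrite [g b]surjective_pairing hh; auto.
- move=> b c hb hc. rewrite [g b]surjective_pairing [g c]surjective_pairing.
  rewrite !hh; try exact: g1.
  move=> e. apply: g2 => //. apply: si1 => //; exact: g1.
- move=> r hr. have [t1 t2] := ta r hr. have [b hb e] := g3 _ t1.
  exists b => //. by rewrite [g b]surjective_pairing hh e.
Qed.

Lemma perm_phi n i g : Perm n g -> Perm n (fun b => phi n i (g b)).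
Proof.
move=> hg. case: (boolP (0 < i < n)%N) => hi.
  apply: (permS_map (sigma := swapn i) (tau := swapn i) hg).
  - by move=> s j _; rewrite phi_small.
  - move=> j k hj hk. crush.
  - move=> j hj. crush.
  - move=> r hr. split; crush.
apply: (permS_map (sigma := id) (tau := id) hg) => //.
move=> s j _. rewrite /phi (negPf hi). by case: ifP.
Qed.

Lemma perm_act n ws : Perm n (fun b => act n ws (false, b)).
Proof.
elim: ws => [|i ws IH] /=.
  split => //. move=> r hr. by exists r.
exact: perm_phi.
Qed.
Definition Kc n (x : sv) : nat := if x.1 then (n - x.2)%N else 0%N.
Definition K n (g : nat -> sv) : nat := (\sum_(a < n) Kc n (g a))%N.

Lemma sum_one n (P : nat -> bool) b0 : (b0 < n)%N -> P b0 ->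
  (forall b, (b < n)%N -> P b -> b = b0) -> (\sum_(b < n) (P b : nat))%N = 1%N.
Proof.
move=> hb0 p0 u. rewrite (bigD1 (Ordinal hb0)) //= p0 big1 //.
move=> b hb. case: (boolP (P b)) => // pb. case/eqP: hb. apply: val_inj => /=. exact: u.
Qed.

Lemma stepU_inv n x (S : nat -> bool) g : (1 <= x <= n)%N -> (forall r, S r -> (r < x.-1)%N) -> Inv n S g ->
  Inv n (fun r => S r || (r == x.-1)) (fun b => act n (iota x (n.+1 - x)) (g b)).
Proof.
move=> hx hS [hp hs].
have Sf : forall r, (x.-1 <= r)%N -> S r = false.
  move=> r hr. apply/negP => /hS. lia.
have [g1 g2 g3] := hp.
split.
  apply: (permS_map (sigma := fun j => if j == n.-1 then x.-1 else if (x.-1 <= j)%N then j.+1 else j)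
      (tau := fun r => if r == x.-1 then n.-1 else if (x.-1 < r)%N then r.-1 else r) hp).
  - move=> s j hj. rewrite act_u //. crush.
  - move=> j k hj hk. crush.
  - move=> j hj. crush.
  - move=> r hr. split; crush.
move=> b hb. have := hs b hb. have := g1 b hb.
case: (g b) => s j /= hj ->. rewrite act_u //.
case: eqP => [e|ne] /=.
  rewrite Sf /=; last lia. by rewrite eqxx orbT.
case: ifP => h /=.
  rewrite Sf; last lia. rewrite Sf /=; last lia. apply/esym/eqP. lia.
case E: (j == x.-1); last by rewrite orbF.
lia.
Qed.

Lemma stepU_K n x (S : nat -> bool) g : (1 <= x <= n)%N -> (forall r, S r -> (r < x.-1)%N) -> Inv n S g ->
  K n (fun b => act n (iota x (n.+1 - x)) (g b)) = (K n g + (n.+1 - x))%N.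
Proof.
move=> hx hS [[g1 g2 g3] hs].
have Sf : forall r, (x.-1 <= r)%N -> S r = false.
  move=> r hr. apply/negP => /hS. lia.
rewrite /K.
transitivity (\sum_(b < n) (Kc n (g b) + (((g b).2 == n.-1) : nat) * (n.+1 - x)))%N; last first.
  rewrite big_split /=. congr (_ + _)%N.
  rewrite -big_distrl /=. have [b0 hb0 e0] := g3 n.-1 ltac:(lia).
  rewrite (@sum_one n (fun b => (g b).2 == n.-1) b0) ?mul1n //.
  - by rewrite e0 eqxx.
  - move=> b hb /eqP e. apply: g2 => //. by rewrite e e0.
apply: eq_bigr => b _.
have := hs b (ltn_ord b). have := g1 b (ltn_ord b).
case: (g b) => s j /= hj ->. rewrite act_u // /Kc.
case: eqP => [e|ne] /=.
  rewrite Sf /=; last lia. lia.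
case h: (x.-1 <= j)%N => /=.
  rewrite Sf /=; last lia. lia.
case: (S j) => /=; lia.
Qed.

Lemma stepV_inv n y (S : nat -> bool) g : (1 <= y <= n)%N -> (forall r, S r -> (y <= r)%N) -> Inv n S g ->
  Inv n (fun r => S r || (r == y.-1)) (fun b => act n (rhoW n y) (g b)).
Proof.
move=> hy hS [hp hs].
have Sf : forall r, (r < y)%N -> S r = false.
  move=> r hr. apply/negP => /hS. lia.
have [g1 g2 g3] := hp.
split.
  apply: (permS_map (sigma := fun j => if j == 0%N then y.-1 else if (j < y)%N then j.-1 else j)
      (tau := fun r => if r == y.-1 then 0%N else if (r < y.-1)%N then r.+1 else r) hp).
  - move=> s j hj. rewrite act_rho //. crush.
  - move=> j k hj hk. crush.
  - move=> j hj. crush.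
  - move=> r hr. split; crush.
move=> b hb. have := hs b hb. have := g1 b hb.
case: (g b) => s j /= hj ->. rewrite act_rho //.
case: eqP => [e|ne] /=.
  rewrite Sf /=; last lia. by rewrite eqxx orbT.
case: ifP => h /=.
  rewrite Sf; last lia. rewrite Sf /=; last lia. apply/esym/eqP. lia.
case E: (j == y.-1); last by rewrite orbF.
lia.
Qed.
Lemma stepU_dec n x (S : nat -> bool) g : (1 <= x <= n)%N -> (forall r, S r -> (r < x.-1)%N) -> Inv n S g ->
  Dec n g -> Dec n (fun b => act n (iota x (n.+1 - x)) (g b)).
Proof.
move=> hx hS [[g1 g2 g3] hs] hd a b hab hb.
have ha : (a < n)%N by lia.
have := hd a b hab hb. have := g2 a b ha hb. have := hs a ha. have := hs b hb.
have := g1 a ha. have := g1 b hb.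
case: (g a) => s j; case: (g b) => t k /= hk hj -> ->.
have hS' : forall r, S r = true -> (r < x.-1)%N by move=> r /hS.
move=> hne.
have {}hne : j <> k by move=> e; have := hne e; lia.
rewrite !act_u //.
have hj' := hS' j; have hk' := hS' k.
case: (j =P n.-1) => ej; case: (k =P n.-1) => ek;
case hj1: (x.-1 <= j)%N; case hk1: (x.-1 <= k)%N; rewrite /key;
case: (S j) hj'; case: (S k) hk' => /= h1 h2; try have := h1 erefl; try have := h2 erefl; lia.
Qed.

Definition Ic n (g : nat -> sv) : nat :=
  (\sum_(a < n) \sum_(b < n) (((a < b) && (key n (g a) < key n (g b))) : nat))%N.
Definition fc n g := (Ic n g + K n g)%N.

Lemma big_only n (F : 'I_n -> nat) a0 : (forall a, a != a0 -> F a = 0%N) -> (\sum_(a < n) F a)%N = F a0.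
Proof. move=> h. rewrite (bigD1 a0) //= big1 ?addn0 //. Qed.

Lemma fc_ext n g g' : (forall b, (b < n)%N -> g b = g' b) -> fc n g = fc n g'.
Proof.
move=> h. rewrite /fc /Ic /K. congr (_ + _)%N.
  apply: eq_bigr => a _; apply: eq_bigr => b _. by rewrite !h.
apply: eq_bigr => a _. by rewrite h.
Qed.

Definition bad i (x y : sv) : bool :=
  (x.1 == y.1) && (((x.2 == i.-1) && (y.2 == i)) || ((x.2 == i) && (y.2 == i.-1))).

Lemma pair_small n i x y : (0 < i < n)%N -> (x.2 < n)%N -> (y.2 < n)%N -> x.2 <> y.2 ->
  (((key n (phi n i x) < key n (phi n i y)) : nat) <= (key n x < key n y) + bad i x y)%N.
Proof.
move=> hi hx hy hne. rewrite !phi_small // /key /bad /=.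
case: x hx hne => s j /= hj; case: y hy => t k /= hk hne.
case: s; case: t => /=; rewrite ?eqxx /=; crush.
Qed.

Lemma pair_top n x y : (0 < n)%N -> (x.2 < n)%N -> (y.2 < n)%N -> x.2 <> y.2 ->
  (key n (phi n n x) < key n (phi n n y)) = (key n x < key n y).
Proof.
move=> hn hx hy hne. rewrite !phi_top /key /=.
case: x hx hne => s j /= hj; case: y hy => t k /= hk hne.
case: (j =P n.-1) => ej; case: (k =P n.-1) => ek; case: s; case: t => /=; apply/idP/idP; lia.
Qed.

Lemma Kc_small n i x : (0 < i < n)%N -> (x.2 < n)%N ->
  (Kc n (phi n i x) + (x.1 && (x.2 == i.-1)) = Kc n x + (x.1 && (x.2 == i)))%N.
Proof.
move=> hi hx. rewrite phi_small // /Kc /=. case: x hx => [[] j] /= hj; crush.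
Qed.

Lemma Kc_top n x : (x.2 < n)%N -> (Kc n (phi n n x) <= Kc n x + (x.2 == n.-1))%N.
Proof.
move=> hx. rewrite phi_top /Kc /=. case: x hx => [s j] /= hj.
case: (j =P n.-1) => e; case: s => /=; lia.
Qed.

Lemma dsum_only n (P : 'I_n -> 'I_n -> bool) p q :
  (forall a b, P a b -> a = p /\ b = q) ->
  (\sum_(a < n) \sum_(b < n) (P a b : nat))%N = P p q.
Proof.
move=> h. rewrite (big_only (a0 := p)).
  rewrite (big_only (a0 := q)) //. move=> b hb. case E: (P p b) => //. by case: (h _ _ E) => _ e; rewrite e eqxx in hb.
move=> a ha. apply: big1 => b _. case E: (P a b) => //. by case: (h _ _ E) => e _; rewrite e eqxx in ha.
Qed.

Lemma mono n i g : (0 < i <= n)%N -> Perm n g ->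
  (fc n (fun b => phi n i (g b)) <= fc n g + 1)%N.
Proof.
move=> hi [g1 g2 g3]. rewrite /fc /Ic /K.
have hrow : forall a b : 'I_n, a != b -> (g a).2 <> (g b).2.
  move=> a b hab e. have := g2 a b (ltn_ord a) (ltn_ord b) e. move=> e'. case/eqP: hab. exact: val_inj.
case: (ltnP i n) => hin.
  have hi' : (0 < i < n)%N by lia.
  have [A hA eA] := g3 i.-1 ltac:(lia). have [B hB eB] := g3 i ltac:(lia).
  set oA := Ordinal hA. set oB := Ordinal hB.
  have h1 : (\sum_(a < n) \sum_(b < n) (((a < b) && (key n (phi n i (g a)) < key n (phi n i (g b)))) : nat)
     <= \sum_(a < n) \sum_(b < n) (((a < b) && (key n (g a) < key n (g b))) : nat)
      + \sum_(a < n) \sum_(b < n) (((a < b) && bad i (g a) (g b)) : nat))%N.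
    rewrite -big_split /=. apply: leq_sum => a _. rewrite -big_split /=. apply: leq_sum => b _.
    case: (ltnP a b) => hab /=; last by [].
    apply: pair_small => //; try exact: g1. apply: hrow. rewrite neq_ltn hab //.
  have h2 : (\sum_(a < n) \sum_(b < n) (((a < b) && bad i (g a) (g b)) : nat) <= ((g A).1 == (g B).1))%N.
    have hu : forall a b : 'I_n, (a < b) && bad i (g a) (g b) ->
        a = (if (A < B)%N then oA else oB) /\ b = (if (A < B)%N then oB else oA).
      move=> a b /andP[hab hb]. move: hb; rewrite /bad => /andP[_ /orP[] /andP[/eqP ea /eqP eb]].
      + have e1 : (a : nat) = A by apply: g2 => //; rewrite ea eA.
        have e2 : (b : nat) = B by apply: g2 => //; rewrite eb eB.
        rewrite -e1 -e2 hab; split; exact: val_inj.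
      + have e1 : (a : nat) = B by apply: g2 => //; rewrite ea eB.
        have e2 : (b : nat) = A by apply: g2 => //; rewrite eb eA.
        rewrite -e1 -e2 ltnNge (ltnW hab) /=; split; exact: val_inj.
    rewrite (dsum_only hu). case: ifP => _ /=; case E: (_ && _) => //=;
      move/andP: E => [_ /andP[/eqP e _]]; by rewrite e eqxx.
  have h3 : (\sum_(a < n) Kc n (phi n i (g a)) + (g A).1 = \sum_(a < n) Kc n (g a) + (g B).1)%N.
    have -> : (g A).1 = \sum_(a < n) ((g a).1 && ((g a).2 == i.-1)) :> nat.
      rewrite (big_only (a0 := oA)) /= ?eA ?eqxx ?andbT //.
      move=> a ha. case E: ((g a).2 == i.-1); rewrite ?andbF //.
      case/eqP: ha. apply: val_inj => /=. apply: g2 => //. by rewrite (eqP E) eA.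
    have -> : (g B).1 = \sum_(a < n) ((g a).1 && ((g a).2 == i)) :> nat.
      rewrite (big_only (a0 := oB)) /= ?eB ?eqxx ?andbT //.
      move=> a ha. case E: ((g a).2 == i); rewrite ?andbF //.
      case/eqP: ha. apply: val_inj => /=. apply: g2 => //. by rewrite (eqP E) eB.
    rewrite -!big_split /=. apply: eq_bigr => a _. apply: Kc_small => //. exact: g1.
  move: h1 h2 h3. case: ((g A).1); case: ((g B).1) => /=; lia.
have hin' : i = n by lia.
rewrite hin'.
have -> : (\sum_(a < n) \sum_(b < n) (((a < b) && (key n (phi n n (g a)) < key n (phi n n (g b)))) : nat)
   = \sum_(a < n) \sum_(b < n) (((a < b) && (key n (g a) < key n (g b))) : nat))%N.
  apply: eq_bigr => a _; apply: eq_bigr => b _.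
  case: (ltnP a b) => hab //=. rewrite pair_top //; try exact: g1; try lia.
  apply: hrow. rewrite neq_ltn hab //.
have [C hC eC] := g3 n.-1 ltac:(lia). set oC := Ordinal hC.
have h4 : (\sum_(a < n) (((g a).2 == n.-1) : nat) = 1)%N.
  rewrite (big_only (a0 := oC)) /= ?eC ?eqxx //.
  move=> a ha. case E: ((g a).2 == n.-1) => //.
  case/eqP: ha. apply: val_inj => /=. apply: g2 => //. by rewrite (eqP E) eC.
have h5 : (\sum_(a < n) Kc n (phi n n (g a)) <= \sum_(a < n) Kc n (g a) + \sum_(a < n) (((g a).2 == n.-1) : nat))%N.
  rewrite -big_split /=. apply: leq_sum => a _. apply: Kc_top. exact: g1.
lia.
Qed.
Definition mdec n (M : 'M[int]_n) (b : nat) : sv :=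
  match insub b : option 'I_n with
  | Some b' => match [pick a | M a b' != 0%R] with
               | Some a => ((M a b' < 0)%R, val a) | None => (false, 0%N) end
  | None => (false, 0%N) end.

Lemma dec_mat n A b : (b < n)%N -> ((A (false, b)).2 < n)%N -> mdec (mat n A) b = A (false, b).
Proof.
move=> hb hr. rewrite /mdec. case: insubP => [b' _ eb|]; last by rewrite hb.
subst b.
case: pickP => [a|none].
  rewrite !mxE /=. case: (@eqP _ (a : nat) (A (false, b' : nat)).2) => [e|_]; last by rewrite eqxx.
  move=> _. apply/eqP. rewrite [A _]surjective_pairing xpair_eqE -e eqxx andbT.
  by case: (A _).1.
have := none (Ordinal hr). by rewrite !mxE /= eqxx; case: (A _).1.
Qed.

Definition Fm n (M : 'M[int]_n) : nat := fc n (mdec M).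

Lemma fc_act n ws : W_word n ws -> (fc n (fun b => act n ws (false, b)) <= size ws)%N.
Proof.
elim: ws => [|i ws IH] /=.
  move=> _. rewrite /fc /Ic /K. rewrite big1; last first.
    move=> a _; apply: big1 => b _. rewrite /key /=. case: (ltnP a b) => //= h. lia.
  by rewrite big1.
move=> /andP[hi hw]. change (fc n (fun b => phi n i (act n ws (false, b))) <= (size ws).+1)%N.
have := mono hi (perm_act n ws). have := IH hw. lia.
Qed.

Lemma Fm_wprod n ws : W_word n ws -> (Fm (wprod n ws) <= size ws)%N.
Proof.
move=> hw. rewrite /Fm wprod_mat (@fc_ext n _ (fun b => act n ws (false, b))); first exact: fc_act.
move=> b hb. apply: dec_mat => //. exact: act_lt.
Qed.
Lemma gen_perm_k n k (pi : nat -> nat) : (k <= n)%N ->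
  (forall b, (b < n)%N -> (pi b < n)%N) ->
  (forall b c, (b < n)%N -> (c < n)%N -> pi b = pi c -> b = c) ->
  (forall b, (k <= b < n)%N -> pi b = b) ->
  exists2 ws, all (fun i => 0 < i < n)%N ws & forall b, (b < n)%N -> act n ws (false, b) = (false, pi b).
Proof.
elim: k pi => [|k IH] pi hk h1 h2 h3.
  exists [::] => // b hb /=. by rewrite h3 //.
set p := pi k.
have hpn : (p < n)%N := h1 k ltac:(lia).
have hp : (p <= k)%N.
  rewrite leqNgt; apply/negP => hpk. have e := h3 p ltac:(lia).
  have := h2 p k ltac:(lia) ltac:(lia) e. lia.
set pi' := fun b => rcyc p.+1 (k - p) (pi b).
have [ws' hw' e'] : exists2 ws, all (fun i => 0 < i < n)%N ws & forall b, (b < n)%N -> act n ws (false, b) = (false, pi' b).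
  apply: IH; first lia.
  - move=> b hb. have := h1 b hb. rewrite /pi' /rcyc. crush.
  - move=> b c hb hc. rewrite /pi' /rcyc => e. apply: h2 => //. move: e. crush.
  - move=> b hb. rewrite /pi' /rcyc. case: (b =P k) => [eb|nb].
      rewrite eb -/p. crush.
    have := h3 b ltac:(lia). move=> ->. crush.
exists (iota p.+1 (k - p) ++ ws').
  rewrite all_cat hw' andbT. apply/allP => i. rewrite mem_iota. lia.
move=> b hb. rewrite act_cat e' // act_iota; try lia. congr (_, _).
rewrite /pi' /cyc /rcyc. have := h1 b hb. crush.
Qed.

Lemma coset_gen n (S : nat -> bool) g g' : Inv n S g -> Inv n S g' ->
  exists2 ws, all (fun i => 0 < i < n)%N ws &
    forall b, (b < n)%N -> g' b = g (act n ws (false, b)).2 /\ (act n ws (false, b)).1 = false.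
Proof.
move=> [[g1 g2 g3] hs] [[g1' g2' g3'] hs'].
pose pi := fun b => if [pick c : 'I_n | (g c).2 == (g' b).2] is Some c then val c else 0%N.
have hpi : forall b, (b < n)%N -> (pi b < n)%N /\ (g (pi b)).2 = (g' b).2.
  move=> b hb. rewrite /pi. case: pickP => [c /eqP e|none]; first by split; [exact: ltn_ord|].
  have [c0 hc ec] := g3 _ (g1' b hb). have := none (Ordinal hc). by rewrite /= ec eqxx.
have [ws hw e] := @gen_perm_k n n pi (leqnn n) (fun b hb => (hpi b hb).1)
  ltac:(move=> b c hb hc ebc; apply: g2' => //; rewrite -(hpi b hb).2 -(hpi c hc).2 ebc //)
  ltac:(move=> b; lia).
exists ws => // b hb. rewrite e //=. split => //.
have [h1 h2] := hpi b hb.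
rewrite [g (pi b)]surjective_pairing [g' b]surjective_pairing h2 hs // hs' // h2 //.
Qed.

Lemma Inv_ext n (S S' : nat -> bool) g : S =1 S' -> Inv n S g -> Inv n S' g.
Proof. move=> e [hp hs]; split => // b hb. by rewrite -e hs. Qed.

Lemma Inv_id n : Inv n (fun _ => false) (fun b => (false, b)).
Proof. split => //. split => //. move=> r hr; by exists r. Qed.

Lemma Dec_id n : Dec n (fun b => (false, b)).
Proof. move=> a b hab hb. rewrite /key /=. lia. Qed.

Lemma Inv_fext n S g g' : (forall b, g b = g' b) -> Inv n S g -> Inv n S g'.
Proof.
move=> e [[g1 g2 g3] hs]. split; first split.
- move=> b; rewrite -e; exact: g1.
- move=> b c; rewrite -!e; exact: g2.
- move=> r hr; have [b hb eb] := g3 r hr; exists b => //; by rewrite -e.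
- move=> b; rewrite -e; exact: hs.
Qed.

Lemma Dec_fext n g g' : (forall b, g b = g' b) -> Dec n g -> Dec n g'.
Proof. move=> e h a b; rewrite -!e; exact: h. Qed.

Lemma K_fext n g g' : (forall b, g b = g' b) -> K n g = K n g'.
Proof. move=> e; apply: eq_bigr => a _; by rewrite e. Qed.

Lemma U_props n lam : strict_part n lam ->
  [/\ Inv n (fun r => r.+1 \in lam) (fun b => act n (Uword n lam) (false, b)),
      Dec n (fun b => act n (Uword n lam) (false, b)) &
      K n (fun b => act n (Uword n lam) (false, b)) = size (Uword n lam)].
Proof.
elim: lam => [|x xs IH] /=.
  move=> _. split.
  - exact: Inv_id.
  - exact: Dec_id.
  - rewrite /K big1 //.
move=> /andP[]. rewrite sorted_pairwise; last by move=> a b c; lia.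
rewrite /= => /andP[hx hp] /andP[/andP[hx1 hx2] ha].
have [i1 d1 k1] : [/\ Inv n (fun r => r.+1 \in xs) (fun b => act n (Uword n xs) (false, b)),
      Dec n (fun b => act n (Uword n xs) (false, b)) &
      K n (fun b => act n (Uword n xs) (false, b)) = size (Uword n xs)].
  apply: IH. rewrite /strict_part ha andbT sorted_pairwise //. by move=> a b c; lia.
have hxn : (1 <= x <= n)%N by lia.
have hS : forall r, (r.+1 \in xs) -> (r < x.-1)%N.
  move=> r hr. have := allP hx _ hr. lia.
have eU : forall b, act n (iota x (n.+1 - x)) (act n (Uword n xs) (false, b)) = act n (Uword n (x :: xs)) (false, b).
  move=> b. by rewrite /Uword /= act_cat.
split.
- apply: (@Inv_fext _ _ _ _ eU).
  apply: (Inv_ext (S := fun r => (r.+1 \in xs) || (r == x.-1))).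
    move=> r /=. rewrite in_cons orbC. congr (_ || _). apply/eqP/eqP; lia.
  exact: stepU_inv.
- apply: (@Dec_fext _ _ _ eU). exact: stepU_dec i1 d1.
- rewrite -(@K_fext _ _ _ eU) (stepU_K hxn hS i1) k1 /Uword /= size_cat size_iota. lia.
Qed.

Lemma V_props n lam : strict_part n lam ->
  Inv n (fun r => r.+1 \in lam) (fun b => act n (Vword n lam) (false, b)).
Proof.
elim/last_ind: lam => [|ys y IH] /=.
  move=> _. exact: Inv_id.
move=> /andP[]. rewrite sorted_pairwise; last by move=> a b c; lia.
rewrite -cats1 pairwise_cat all_cat /= andbT => /andP[hr hp] /andP[ha /andP[hy1 hy2]].
have i1 : Inv n (fun r => r.+1 \in ys) (fun b => act n (Vword n ys) (false, b)).
  apply: IH. rewrite /strict_part ha andbT sorted_pairwise //. by move=> a b c; lia.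
have hyn : (1 <= y <= n)%N by lia.
have hS : forall r, (r.+1 \in ys) -> (y <= r)%N.
  move=> r hr0. have := allrelP hr. move=> h. have := h _ _ hr0 (mem_head y [::]). lia.
have eV : forall b, act n (rhoW n y) (act n (Vword n ys) (false, b)) = act n (Vword n (ys ++ [:: y])) (false, b).
  move=> b. by rewrite /Vword rev_cat /= act_cat.
apply: (@Inv_fext _ _ _ _ eV).
apply: (Inv_ext (S := fun r => (r.+1 \in ys) || (r == y.-1))).
  move=> r /=. rewrite mem_cat mem_seq1. congr (_ || _). apply/eqP/eqP; lia.
exact: stepV_inv.
Qed.
Lemma key_inj n x y : (x.2 < n)%N -> (y.2 < n)%N -> key n x = key n y -> x = y.
Proof.
case: x => s j; case: y => t k /= hj hk. rewrite /key /=.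
case: s; case: t => /= e; try (congr (_, _); lia); lia.
Qed.

Lemma path_iota (R : rel nat) (h : nat -> nat) m k :
  (forall a, (m <= a)%N -> (a < m + k)%N -> R (h a) (h a.+1)) ->
  path R (h m) (map h (iota m.+1 k)).
Proof.
elim: k m => [//|k IH] m hR /=. apply/andP; split.
  apply: hR; lia.
apply: IH => a h1 h2. apply: hR; lia.
Qed.

Lemma sorted_dec n g : Dec n g -> sorted (fun x y => y < x)%N (map (fun b => key n (g b)) (iota 0 n)).
Proof.
case: n => [//|n] hd /=. apply: (path_iota (h := fun b => key n.+1 (g b))) => a _ ha.
apply: hd; lia.
Qed.

Lemma mem_keys n S g g' x : Inv n S g -> Inv n S g' ->
  x \in map (fun b => key n (g b)) (iota 0 n) -> x \in map (fun b => key n (g' b)) (iota 0 n).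
Proof.
move=> [[g1 g2 g3] hs] [[g1' g2' g3'] hs'] /mapP[b]. rewrite mem_iota /= => hb ->.
have [c hc ec] := g3' _ (g1 b hb).
apply/mapP. exists c; first by rewrite mem_iota; lia.
congr (key n _). rewrite [g b]surjective_pairing [g' c]surjective_pairing hs // hs' // ec //.
Qed.

Lemma dec_unique n S g g' : Inv n S g -> Inv n S g' -> Dec n g -> Dec n g' ->
  forall b, (b < n)%N -> g b = g' b.
Proof.
move=> i1 i2 d1 d2.
have e : map (fun b => key n (g b)) (iota 0 n) = map (fun b => key n (g' b)) (iota 0 n).
  apply: (@irr_sorted_eq _ (fun x y => y < x)%N).
  - move=> a b c; lia.
  - move=> a; lia.
  - exact: sorted_dec.
  - exact: sorted_dec.
  - move=> x. apply/idP/idP => h; [exact: (mem_keys i1 i2 h) | exact: (mem_keys i2 i1 h)].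
move=> b hb. have := congr1 (fun s => nth 0%N s b) e.
rewrite !(nth_map 0%N) ?size_iota // !nth_iota // add0n.
case: i1 => [[g1 _ _] _]. case: i2 => [[g1' _ _] _].
apply: key_inj; auto.
Qed.

Lemma Ic0_dec n g : Perm n g -> Ic n g = 0%N -> Dec n g.
Proof.
move=> [g1 g2 g3] h0 a b hab hb.
have ha : (a < n)%N by lia.
rewrite ltnNge leq_eqVlt. apply/negP => /orP[/eqP e|lt].
  have := key_inj (g1 a ha) (g1 b hb) e. move=> e'. have := g2 a b ha hb. rewrite e'. move=> /(_ erefl). lia.
have : (((Ordinal ha < Ordinal hb) && (key n (g a) < key n (g b))) : nat) <= Ic n g.
  rewrite /Ic (bigD1 (Ordinal ha)) //= (bigD1 (Ordinal hb)) //=. lia.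
rewrite h0 /= hab lt. by [].
Qed.

Lemma K_perm n g (pi : nat -> nat) : (forall b, (b < n)%N -> (pi b < n)%N) ->
  (forall b c, (b < n)%N -> (c < n)%N -> pi b = pi c -> b = c) ->
  K n (fun b => g (pi b)) = K n g.
Proof.
move=> h1 h2. rewrite /K.
pose po (a : 'I_n) : 'I_n := Ordinal (h1 a (ltn_ord a)).
have poi : injective po.
  move=> a b /(congr1 val) /= e. apply: val_inj. exact: (h2 a b (ltn_ord a) (ltn_ord b) e).
by rewrite [in RHS](reindex_inj poi).
Qed.

Lemma Inv_comp n S g (q : nat -> sv) : Inv n S g -> Perm n q -> (forall b, (b < n)%N -> (q b).1 = false) ->
  Inv n S (fun b => g (q b).2).
Proof.
move=> [[g1 g2 g3] hs] [q1 q2 q3] qs. split; first split.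
- move=> b hb. apply: g1. exact: q1.
- move=> b c hb hc e. apply: q2 => //. apply: g2 => //; exact: q1.
- move=> r hr. have [c hc ec] := g3 r hr. have [b hb eb] := q3 c hc. exists b => //. by rewrite eb.
- move=> b hb. apply: hs. exact: q1.
Qed.

Lemma act_WP_sign n ws b : all (fun i => 0 < i < n)%N ws -> (act n ws (false, b)).1 = false.
Proof.
elim: ws => [//|i ws IH] /= /andP[hi hw]. rewrite phi_small //. exact: IH.
Qed.
Lemma ex_min_prop (P : nat -> Prop) : (exists k, P k) -> exists m, P m /\ forall k, P k -> (m <= k)%N.
Proof.
move=> [k pk]. apply: NNPP => hno.
have : forall k j, (j <= k)%N -> ~ P j.
  elim=> [|k' IH] j hj pj.
    apply: hno. exists j; split => // k0 _. lia.
  case: (leqP j k') => h; first exact: IH h pj.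
  apply: hno. exists j; split => // k0 pk0. rewrite leqNgt; apply/negP => lt.
  exact: (IH k0 ltac:(lia) pk0).
move=> /(_ k k (leqnn k)). by apply.
Qed.

Theorem proposition3p6 (n : nat) (lam : seq nat) :
  strict_part n lam -> min_coset_rep (v_lam n lam) (u_lam n (lam_star n lam)).
Proof.
move=> hsp.
have hall : all (fun k => k <= n)%N lam.
  case/andP: hsp => _ /allP h. apply/allP => k /h. lia.
rewrite u_lam_w // v_lam_w.
set UW := Uword n lam. set VW := Vword n lam.
have [iU dU kU] := U_props hsp. have iV := V_props hsp.
rewrite -/UW -/VW in iU dU kU iV.
have [ws hw hws] := coset_gen iV iU.
have hUW : W_word n UW.
  rewrite /UW /Uword /W_word. apply/allP => i /flatten_mapP[x hx].
  rewrite mem_iota. case/andP: hsp => _ /allP h. have := h x hx. lia.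
have colU : forall b, (b < n)%N -> act n UW (false, b) = act n VW (act n ws (false, b)).
  move=> b hb. have [e1 e2] := hws b hb. by rewrite e1 [act n ws _]surjective_pairing e2.
have matmul : forall ws', (wprod n VW *m wprod n ws')%R = mat n (fun x => act n VW (act n ws' x)).
  move=> ws'. rewrite !wprod_mat mat_mul //.
  - move=> b hb. exact: act_lt.
  - move=> x. exact: act_neg.
split.
  exists ws => //. rewrite matmul !wprod_mat. apply: mat_ext. exact: colU.
have hex : exists k, exists2 ws0, W_word n ws0 & (size ws0 = k /\ wprod n ws0 = wprod n UW).
  by exists (size UW); exists UW.
split.
  case: (ex_min_prop hex) => m [[ws1 h1 [h2 h3]] hmin]. exists m. split.
    by exists ws1.
  move=> ws' hw' e'. apply: hmin. by exists ws'.
move=> w [ws' hw' ->] hne lu lw [_ hlu] [[wsw hww [sw ew]] _].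
have lu_le : (lu <= size UW)%N by apply: hlu.
have Fw : (Fm (wprod n VW *m wprod n ws')%R <= lw)%N.
  by rewrite -sw -ew; apply: Fm_wprod.
rewrite matmul in Fw.
have [q1 q2 q3] := perm_act n ws'.
set gV := fun b => act n VW (false, b).
set gw := fun b => gV (act n ws' (false, b)).2.
have egw : forall b, (b < n)%N -> act n VW (act n ws' (false, b)) = gw b.
  move=> b hb. by rewrite /gw /gV [act n ws' _]surjective_pairing act_WP_sign.
have Fe : Fm (mat n (fun x => act n VW (act n ws' x))) = fc n gw.
  rewrite /Fm. apply: fc_ext => b hb. rewrite dec_mat //. exact: egw. rewrite /=. apply: act_lt. exact: act_lt.
rewrite Fe in Fw.
have Kw : K n gw = size UW.
  rewrite /gw (@K_perm n gV (fun b => (act n ws' (false, b)).2)) //.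
  rewrite -kU. have [p1 p2 p3] := perm_act n ws.
  rewrite -(@K_perm n gV (fun b => (act n ws (false, b)).2)) //.
  apply: eq_bigr => b _. rewrite colU //. congr (Kc n _). rewrite /gV.
  by rewrite [act n ws _]surjective_pairing act_WP_sign.
have Iw : (1 <= Ic n gw)%N.
  rewrite lt0n. apply/negP => /eqP h0.
  have iw : Inv n (fun r => r.+1 \in lam) gw.
    apply: Inv_comp => //. move=> b hb. exact: act_WP_sign.
  have dw := Ic0_dec (proj1 iw) h0.
  have := dec_unique iw iU dw dU. move=> hu. apply: hne.
  rewrite matmul wprod_mat. apply: mat_ext => b hb. by rewrite egw // hu.
move: Fw. rewrite /fc Kw. lia.
Qed.
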